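(* Let $k\ge1$, $j\ge0$ be integers, and let $h$ have a continuous derivative of order $k+j$ on an interval $(a,b)$. Then for all $a<u<v<b$, \[ \int_u^v h^{(k+j)}(t)\,(t-u)^{k-1}(v-t)^{j}\,dt=(v-u)^{k+j}\,{}_jM_{k-1}(u,v). \]
   Context: For a function $h$ set $M(u,v)=\frac{h(v)-h(u)}{v-u}$ for $u\ne v$, and ${}_iM_j(u,v)=\frac{\partial^{i+j}}{\partial u^i\partial v^j}M(u,v)$ (partial derivatives $i$ times in $u$ and $j$ times in $v$). *)

(* Defs.v *)
From Stdlib Require Import Reals Lra Lia.
Open Scope R_scope.

(* Divided difference M(u,v) = (h v - h u)/(v - u), meaningful for u <> v. *)
Definition M (h : R -> R) (u v : R) : R := (h v - h u) / (v - u).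

(* Main.v *)
Require Import Defs.
From Stdlib Require Import Reals Lra Lia ClassicalEpsilon FunctionalExtensionality.
Open Scope R_scope.

Definition RInt (f : R -> R) (p q : R) : R :=
  match excluded_middle_informative (inhabited (Riemann_integrable f p q)) with
  | left H => RiemannInt (epsilon H (fun _ => True))
  | right _ => 0
  end.

Lemma RInt_eq f p q (pr : Riemann_integrable f p q) : RInt f p q = RiemannInt pr.
Proof.
  unfold RInt; destruct excluded_middle_informative as [H|H].
  - apply RiemannInt_P5.
  - exfalso; apply H; constructor; exact pr.
Qed.

Definition contI (a b : R) (g : R -> R) := forall t, a < t < b -> continuity_pt g t.

Lemma int_of_cont a b g p q : contI a b g -> a < p -> p <= q -> q < b ->
  Riemann_integrable g p q.
Proof.
  intros Hc H1 H2 H3; apply continuity_implies_RiemannInt; auto.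
  intros; apply Hc; lra.
Qed.

Lemma RInt_add a b g p q r : contI a b g -> a < p -> p <= q -> q <= r -> r < b ->
  RInt g p q + RInt g q r = RInt g p r.
Proof.
  intros Hc H1 H2 H3 H4.
  rewrite (RInt_eq _ _ _ (int_of_cont a b g p q Hc ltac:(lra) ltac:(lra) ltac:(lra))).
  rewrite (RInt_eq _ _ _ (int_of_cont a b g q r Hc ltac:(lra) ltac:(lra) ltac:(lra))).
  rewrite (RInt_eq _ _ _ (int_of_cont a b g p r Hc ltac:(lra) ltac:(lra) ltac:(lra))).
  apply RiemannInt_P26.
Qed.

Lemma RInt_lin a b f g l p q : contI a b f -> contI a b g -> a < p -> p <= q -> q < b ->
  RInt (fun t => f t + l * g t) p q = RInt f p q + l * RInt g p q.
Proof.
  intros Hf Hg H1 H2 H3.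
  pose proof (int_of_cont a b f p q Hf H1 H2 H3) as pf.
  pose proof (int_of_cont a b g p q Hg H1 H2 H3) as pg.
  rewrite (RInt_eq _ _ _ pf), (RInt_eq _ _ _ pg), (RInt_eq _ _ _ (RiemannInt_P10 l pf pg)).
  apply RiemannInt_P13.
Qed.

Lemma RInt_refl f p : RInt f p p = 0.
Proof.
  unfold RInt; destruct excluded_middle_informative as [H|H]; auto.
  apply RiemannInt_P9.
Qed.

Lemma deriv_upper a b g p y : contI a b g -> a < p -> p < y -> y < b ->
  derivable_pt_lim (fun z => RInt g p z) y (g y).
Proof.
  intros Hc H1 H2 H3.
  set (b' := (y + b) / 2).
  assert (h : p <= b') by (unfold b'; lra).
  assert (C0 : forall x, p <= x <= b' -> continuity_pt g x).
  { intros; apply Hc; unfold b' in *; lra. }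
  apply (derivable_pt_lim_locally_ext (primitive h (FTC_P1 h C0)) _ y p b').
  - unfold b'; lra.
  - intros z Hz. unfold primitive.
    destruct (Rle_dec p z); [|lra]. destruct (Rle_dec z b'); [|lra].
    symmetry; apply RInt_eq.
  - apply RiemannInt_P28; unfold b'; lra.
Qed.

Lemma FTC a b g F p q : contI a b g ->
  (forall x, a < x < b -> derivable_pt_lim F x (g x)) ->
  a < p -> p <= q -> q < b -> RInt g p q = F q - F p.
Proof.
  intros Hc HF H1 H2 H3.
  destruct (Req_dec p q) as [<-|Hpq]; [rewrite RInt_refl; ring|].
  set (c := (a + p) / 2).
  assert (Hadd := RInt_add a b g c p q Hc ltac:(unfold c; lra) ltac:(unfold c; lra) H2 H3).
  destruct (MVT_cor2 (fun z => RInt g c z - F z) (fun _ => 0) p q ltac:(lra)) as [x [Hx _]].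
  - intros z Hz. replace 0 with (g z - g z) by ring.
    apply derivable_pt_lim_minus.
    + apply (deriv_upper a b); auto; unfold c; lra.
    + apply HF; lra.
  - lra.
Qed.

Lemma dl_cont f x l : derivable_pt_lim f x l -> continuity_pt f x.
Proof. intro H; apply derivable_continuous_pt; exact (exist _ l H). Qed.

Lemma dl_plus f g x l1 l2 : derivable_pt_lim f x l1 -> derivable_pt_lim g x l2 ->
  derivable_pt_lim (fun t => f t + g t) x (l1 + l2).
Proof. intros; apply (derivable_pt_lim_plus f g); auto. Qed.
Lemma dl_minus f g x l1 l2 : derivable_pt_lim f x l1 -> derivable_pt_lim g x l2 ->
  derivable_pt_lim (fun t => f t - g t) x (l1 - l2).
Proof. intros; apply (derivable_pt_lim_minus f g); auto. Qed.
Lemma dl_mult f g x l1 l2 : derivable_pt_lim f x l1 -> derivable_pt_lim g x l2 ->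
  derivable_pt_lim (fun t => f t * g t) x (l1 * g x + f x * l2).
Proof. intros; apply (derivable_pt_lim_mult f g); auto. Qed.
Lemma dl_div f g x l1 l2 : derivable_pt_lim f x l1 -> derivable_pt_lim g x l2 -> g x <> 0 ->
  derivable_pt_lim (fun t => f t / g t) x ((l1 * g x - l2 * f x) / Rsqr (g x)).
Proof. intros; apply (derivable_pt_lim_div f g); auto. Qed.
Lemma dl_const c x : derivable_pt_lim (fun _ => c) x 0.
Proof. apply (derivable_pt_lim_const c). Qed.
Lemma dl_id x : derivable_pt_lim (fun t => t) x 1.
Proof. apply derivable_pt_lim_id. Qed.
Lemma dl_pow_sh c m x : derivable_pt_lim (fun t => (t - c) ^ m) x (INR m * (x - c) ^ pred m).
Proof.
  replace (INR m * (x - c) ^ pred m) with (INR m * (x - c) ^ pred m * (1 - 0)) by ring.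
  apply (derivable_pt_lim_comp (fun t => t - c) (fun y => y ^ m)).
  - apply dl_minus; [apply dl_id|apply dl_const].
  - apply derivable_pt_lim_pow.
Qed.
Lemma dl_pow_rev c m x : derivable_pt_lim (fun t => (c - t) ^ m) x (- (INR m * (c - x) ^ pred m)).
Proof.
  replace (- (INR m * (c - x) ^ pred m)) with (INR m * (c - x) ^ pred m * (0 - 1)) by ring.
  apply (derivable_pt_lim_comp (fun t => c - t) (fun y => y ^ m)).
  - apply dl_minus; [apply dl_const|apply dl_id].
  - apply derivable_pt_lim_pow.
Qed.

Lemma cont_mult a b f g : contI a b f -> contI a b g -> contI a b (fun t => f t * g t).
Proof. intros Hf Hg t Ht; apply (continuity_pt_mult f g); auto. Qed.
Lemma cont_sh a b c m : contI a b (fun t => (t - c) ^ m).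
Proof. intros t _; eapply dl_cont; apply dl_pow_sh. Qed.
Lemma cont_rev a b c m : contI a b (fun t => (c - t) ^ m).
Proof. intros t _; eapply dl_cont; apply dl_pow_rev. Qed.
Lemma cont_id a b : contI a b (fun t => t).
Proof. intros t _; eapply dl_cont; apply dl_id. Qed.

Lemma deriv_lower a b g x0 q : contI a b g -> a < x0 -> x0 < q -> q < b ->
  derivable_pt_lim (fun x => RInt g x q) x0 (- g x0).
Proof.
  intros Hc H1 H2 H3.
  set (c := (a + x0) / 2).
  apply (derivable_pt_lim_locally_ext (fun x => RInt g c q - RInt g c x) _ x0 c q).
  - unfold c; lra.
  - intros z Hz. rewrite <- (RInt_add a b g c z q); auto; unfold c in *; lra.
  - replace (- g x0) with (0 - g x0) by ring. apply dl_minus; [apply dl_const|].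
    apply (deriv_upper a b); auto; unfold c; lra.
Qed.

Lemma IBP a b F f G g p q : contI a b f -> contI a b g ->
  (forall x, a < x < b -> derivable_pt_lim F x (f x)) ->
  (forall x, a < x < b -> derivable_pt_lim G x (g x)) ->
  a < p -> p <= q -> q < b ->
  RInt (fun t => f t * G t) p q = F q * G q - F p * G p - RInt (fun t => F t * g t) p q.
Proof.
  intros Hf Hg HF HG H1 H2 H3.
  assert (cF : contI a b F) by (intros t Ht; eapply dl_cont; apply HF; auto).
  assert (cG : contI a b G) by (intros t Ht; eapply dl_cont; apply HG; auto).
  assert (E : RInt (fun t => f t * G t + 1 * (F t * g t)) p q = F q * G q - F p * G p).
  { apply (FTC a b (fun t => f t * G t + 1 * (F t * g t)) (fun t => F t * G t)); auto.
    + intros t Ht. apply (continuity_pt_plus (fun t => f t * G t) (fun t => 1 * (F t * g t))).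
      * apply (cont_mult a b f G); auto.
      * apply (continuity_pt_mult (fun _ => 1) (fun t => F t * g t)).
        apply continuity_pt_const; intros ? ?; reflexivity. apply (cont_mult a b F g); auto.
    + intros x Hx. replace (f x * G x + 1 * (F x * g x)) with (f x * G x + F x * g x) by ring.
      apply dl_mult; auto. }
  rewrite (RInt_lin a b) in E; try apply cont_mult; auto. lra.
Qed.

Lemma Deq f x l1 l2 : derivable_pt_lim f x l1 -> l1 = l2 -> derivable_pt_lim f x l2.
Proof. intros H <-; exact H. Qed.

Lemma decomp a b f x v m : contI a b f -> a < x -> x <= v -> v < b ->
  RInt (fun t => f t * (t - x) ^ S m) x v =
  RInt (fun t => (f t * t) * (t - x) ^ m) x v + (- x) * RInt (fun t => f t * (t - x) ^ m) x v.
Proof.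
  intros Hf H1 H2 H3.
  rewrite <- (RInt_lin a b); auto.
  - f_equal; extensionality t; simpl; ring.
  - apply cont_mult; [apply cont_mult; auto; apply cont_id|apply cont_sh].
  - apply cont_mult; auto; apply cont_sh.
Qed.

Lemma Plem a b v : forall m f x0, contI a b f -> a < x0 -> x0 < v -> v < b ->
  derivable_pt_lim (fun x => RInt (fun t => f t * (t - x) ^ m) x v) x0
   (match m with O => - f x0 | S m' => - INR m * RInt (fun t => f t * (t - x0) ^ m') x0 v end).
Proof.
  induction m as [|m IH]; intros f x0 Hf H1 H2 H3.
  - replace (fun x => RInt (fun t => f t * (t - x) ^ 0) x v) with (fun x => RInt f x v).
    + apply (deriv_lower a b); auto.
    + extensionality x; f_equal; extensionality t; simpl; ring.
  - assert (Hfid : contI a b (fun t => f t * t)) by (apply cont_mult; auto; apply cont_id).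
    apply (derivable_pt_lim_locally_ext
      (fun x => RInt (fun t => (f t * t) * (t - x) ^ m) x v + (- x) * RInt (fun t => f t * (t - x) ^ m) x v)
      _ x0 a v).
    + lra.
    + intros z Hz; symmetry; apply (decomp a b); auto; lra.
    + eapply Deq.
      * apply dl_plus; [apply IH; auto|].
        apply (dl_mult (fun t => Ropp t) (fun x => RInt (fun t => f t * (t - x) ^ m) x v)); [|apply IH; auto].
        apply (derivable_pt_lim_opp (fun t => t)); apply dl_id.
      * destruct m as [|m].
        -- simpl. replace (fun t => f t * (t - x0) ^ 0) with f
             by (extensionality t; simpl; ring). ring.
        -- rewrite (decomp a b f x0 v m); auto; try lra.
           rewrite !S_INR. ring.
Qed.

Lemma cont_const a b c : contI a b (fun _ => c).
Proof. intros t _; apply continuity_pt_const; intros ? ?; reflexivity. Qed.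

Lemma RInt_scal a b f c p q : contI a b f -> a < p -> p <= q -> q < b ->
  RInt (fun t => c * f t) p q = c * RInt f p q.
Proof.
  intros Hf H1 H2 H3.
  assert (E := RInt_lin a b (fun _ => 0) f c p q (cont_const a b 0) Hf H1 H2 H3).
  cbv beta in E. replace (fun t => 0 + c * f t) with (fun t => c * f t) in E by (extensionality t; ring).
  rewrite E. replace (RInt (fun _ => 0) p q) with 0; [ring|].
  rewrite (FTC a b (fun _ => 0) (fun _ => 0) p q); auto; [ring|apply cont_const|].
  intros; apply dl_const.
Qed.

Definition NN (D : nat -> R -> R) (i l : nat) (x y : R) : R :=
  RInt (fun t => D (i + l + 1)%nat t * (t - x) ^ l * (y - t) ^ i) x y / (y - x) ^ (i + l + 1).

Lemma stepV a b D (K : nat)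
  (hD : forall n x, (n < K)%nat -> a < x < b -> derivable_pt_lim (D n) x (D (S n) x))
  (hc : forall n, (n <= K)%nat -> contI a b (D n)) l u v :
  (S (S l) <= K)%nat -> a < u -> u < v -> v < b ->
  derivable_pt_lim (fun y => NN D 0 l u y) v (NN D 0 (S l) u v).
Proof.
  intros HK H1 H2 H3. unfold NN.
  replace (0 + l + 1)%nat with (S l) by lia.
  replace (0 + S l + 1)%nat with (S (S l)) by lia.
  set (g := D (S l)).
  replace (fun y => RInt (fun t => g t * (t - u) ^ l * (y - t) ^ 0) u y / (y - u) ^ S l)
    with (fun y => RInt (fun t => g t * (t - u) ^ l) u y / (y - u) ^ S l).
  2:{ extensionality y; f_equal; f_equal; extensionality t; simpl; ring. }
  replace (fun t => D (S (S l)) t * (t - u) ^ S l * (v - t) ^ 0)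
    with (fun t => D (S (S l)) t * (t - u) ^ S l) by (extensionality t; simpl; ring).
  assert (cg : contI a b g) by (apply hc; lia).
  assert (cI : contI a b (fun t => g t * (t - u) ^ l)) by (apply cont_mult; auto; apply cont_sh).
  rewrite (IBP a b g (D (S (S l))) (fun t => (t - u) ^ S l) (fun t => INR (S l) * (t - u) ^ pred (S l))
    u v (hc (S (S l)) ltac:(lia)) (cont_mult a b _ _ (cont_const a b _) (cont_sh a b u _))
    (fun x Hx => hD (S l) x ltac:(lia) Hx) (fun x _ => dl_pow_sh _ _ _) ltac:(lra) ltac:(lra) ltac:(lra)).
  replace (fun t => g t * (INR (S l) * (t - u) ^ pred (S l)))
    with (fun t => INR (S l) * (g t * (t - u) ^ l)) by (extensionality t; simpl; ring).
  rewrite (RInt_scal a b); auto; try lra.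
  eapply Deq.
  - apply (dl_div (fun y => RInt (fun t => g t * (t - u) ^ l) u y) (fun y => (y - u) ^ S l)).
    + apply (deriv_upper a b); auto.
    + apply dl_pow_sh.
    + apply pow_nonzero; lra.
  - cbv beta. set (I := RInt (fun t => g t * (t - u) ^ l) u v).
    assert (w0 : v - u <> 0) by lra.
    assert (wl : (v - u) ^ l <> 0) by (apply pow_nonzero; lra).
    simpl pred. set (c := INR (S l)). unfold Rsqr. replace (u - u) with 0 by ring. simpl.
    field. auto.
Qed.

Lemma cont_plus a b f g : contI a b f -> contI a b g -> contI a b (fun t => f t + g t).
Proof. intros Hf Hg t Ht; apply (continuity_pt_plus f g); auto. Qed.
Lemma cont_opp a b f : contI a b f -> contI a b (fun t => - f t).
Proof. intros Hf t Ht; apply (continuity_pt_opp f); auto. Qed.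

Lemma stepU a b D (K : nat)
  (hD : forall n x, (n < K)%nat -> a < x < b -> derivable_pt_lim (D n) x (D (S n) x))
  (hc : forall n, (n <= K)%nat -> contI a b (D n)) i l u v :
  (i + l + 2 <= K)%nat -> a < u -> u < v -> v < b ->
  derivable_pt_lim (fun x => NN D i l x v) u (NN D (S i) l u v).
Proof.
  intros HK H1 H2 H3. unfold NN.
  replace (S i + l + 1)%nat with (S (i + l + 1)) by lia.
  set (n := (i + l + 1)%nat).
  set (f := fun t => D n t * (v - t) ^ i).
  assert (cf : contI a b f) by (apply cont_mult; [apply hc; unfold n; lia|apply cont_rev]).
  replace (fun x => RInt (fun t => D n t * (t - x) ^ l * (v - t) ^ i) x v / (v - x) ^ n)
    with (fun x => RInt (fun t => f t * (t - x) ^ l) x v / (v - x) ^ n).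
  2:{ extensionality x; f_equal; f_equal; extensionality t; unfold f; ring. }
  replace (fun t => D (S n) t * (t - u) ^ l * (v - t) ^ S i)
    with (fun t => D (S n) t * ((t - u) ^ l * (v - t) ^ S i)) by (extensionality t; ring).
  set (g' := fun t => INR l * (t - u) ^ pred l * (v - t) ^ S i
                      + (t - u) ^ l * (- (INR (S i) * (v - t) ^ pred (S i)))).
  assert (HG : forall x, a < x < b ->
     derivable_pt_lim (fun t => (t - u) ^ l * (v - t) ^ S i) x (g' x)).
  { intros x _. apply (dl_mult (fun t => (t - u) ^ l) (fun t => (v - t) ^ S i));
      [apply dl_pow_sh|apply dl_pow_rev]. }
  assert (cg' : contI a b g').
  { unfold g'. apply cont_plus.
    - apply cont_mult; [apply cont_mult; [apply cont_const|apply cont_sh]|apply cont_rev].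
    - apply cont_mult; [apply cont_sh|apply cont_opp; apply cont_mult; [apply cont_const|apply cont_rev]]. }
  rewrite (IBP a b (D n) (D (S n)) (fun t => (t - u) ^ l * (v - t) ^ S i) g'
    u v (hc (S n) ltac:(unfold n; lia)) cg'
    (fun x Hx => hD n x ltac:(unfold n; lia) Hx) HG ltac:(lra) ltac:(lra) ltac:(lra)).
  set (P := fun t => D n t * (t - u) ^ pred l * (v - t) ^ S i).
  assert (cP : contI a b P).
  { apply cont_mult; [apply cont_mult; [apply hc; unfold n; lia|apply cont_sh]|apply cont_rev]. }
  replace (fun t => D n t * g' t)
    with (fun t => (fun t => INR l * P t) t + (- INR (S i)) * (f t * (t - u) ^ l)).
  2:{ extensionality t. unfold g', P, f. simpl pred. ring. }
  rewrite (RInt_lin a b); try lra.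
  2:{ apply cont_mult; [apply cont_const|auto]. }
  2:{ apply cont_mult; [auto|apply cont_sh]. }
  rewrite (RInt_scal a b); auto; try lra.
  eapply Deq.
  - apply (dl_div (fun x => RInt (fun t => f t * (t - x) ^ l) x v) (fun x => (v - x) ^ n)).
    + apply (Plem a b); auto.
    + apply dl_pow_rev.
    + apply pow_nonzero; lra.
  - cbv beta. set (I := RInt (fun t => f t * (t - u) ^ l) u v).
    assert (w0 : v - u <> 0) by lra.
    replace (v - v) with 0 by ring. replace (u - u) with 0 by ring.
    destruct l as [|m].
    + unfold f. replace n with (S i) by (unfold n; lia).
      simpl pred. set (c := INR (S i)). replace (INR 0) with 0 by reflexivity.
      assert (wi : (v - u) ^ i <> 0) by (apply pow_nonzero; lra).
      unfold Rsqr. simpl. field. auto.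
    + assert (EP : RInt P u v = (v - u) * RInt (fun t => f t * (t - u) ^ m) u v - I).
      { replace P with (fun t => (fun t => (v - u) * (f t * (t - u) ^ m)) t + (-1) * (f t * (t - u) ^ S m)).
        2:{ unfold P, f; extensionality t; simpl; ring. }
        rewrite (RInt_lin a b); try lra.
        - rewrite (RInt_scal a b); try lra. unfold I; ring. apply cont_mult; auto; apply cont_sh.
        - apply cont_mult; [apply cont_const|apply cont_mult; auto; apply cont_sh].
        - apply cont_mult; auto; apply cont_sh. }
      rewrite EP. set (Km := RInt (fun t => f t * (t - u) ^ m) u v).
      assert (En : INR n = INR (S m) + INR (S i)) by (rewrite <- plus_INR; f_equal; unfold n; lia).
      rewrite En. replace n with (S (i + S m)) by (unfold n; lia).
      set (cm := INR (S m)). set (ci := INR (S i)).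
      assert (wp : (v - u) ^ (i + S m) <> 0) by (apply pow_nonzero; lra).
      set (wpp := (v - u) ^ (i + S m)) in *.
      unfold Rsqr. simpl pred. simpl. unfold wpp. simpl. fold wpp. field. auto.
Qed.

Theorem mainTheorem7 (k j : nat) (hk : (1 <= k)%nat) (a b : R)
  (h : R -> R) (D : nat -> R -> R)
  (hD0 : forall x, a < x < b -> D 0%nat x = h x)
  (hD : forall (n : nat) (x : R), (n < k + j)%nat -> a < x < b ->
          derivable_pt_lim (D n) x (D (S n) x))
  (hcont : forall x, a < x < b -> continuity_pt (D (k + j)%nat) x) :
  exists N : nat -> nat -> R -> R -> R,
    (forall u v, a < u < v /\ v < b -> N 0%nat 0%nat u v = M h u v) /\
    (forall (l : nat) u v, (l < k - 1)%nat -> a < u < v /\ v < b ->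
       derivable_pt_lim (fun y => N 0%nat l u y) v (N 0%nat (S l) u v)) /\
    (forall (i : nat) u v, (i < j)%nat -> a < u < v /\ v < b ->
       derivable_pt_lim (fun x => N i (k - 1)%nat x v) u (N (S i) (k - 1)%nat u v)) /\
    (forall u v, a < u < v /\ v < b ->
       exists pr : Riemann_integrable
                     (fun t => D (k + j)%nat t * (t - u) ^ (k - 1) * (v - t) ^ j) u v,
         RiemannInt pr = (v - u) ^ (k + j) * N j (k - 1)%nat u v).
Proof.
  assert (hc : forall n, (n <= k + j)%nat -> contI a b (D n)).
  { intros n Hn t Ht. destruct (Nat.eq_dec n (k + j)) as [->|Hne].
    - apply hcont; auto.
    - eapply dl_cont; apply hD; auto; lia. }
  exists (NN D). split; [|split; [|split]].
  - intros u v [[H1 H2] H3]. unfold NN, M. simpl.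
    replace (fun t => D 1%nat t * 1 * 1) with (D 1%nat) by (extensionality t; ring).
    rewrite (FTC a b (D 1%nat) (D 0%nat) u v); try lra.
    + rewrite !hD0; try lra. field. lra.
    + apply hc; lia.
    + intros; apply hD; auto; lia.
  - intros l u v Hl [[H1 H2] H3]. apply (stepV a b D (k + j)); auto; lia.
  - intros i u v Hi [[H1 H2] H3]. apply (stepU a b D (k + j)); auto; lia.
  - intros u v [[H1 H2] H3].
    assert (cI : contI a b (fun t => D (k + j)%nat t * (t - u) ^ (k - 1) * (v - t) ^ j)).
    { apply cont_mult; [apply cont_mult; [apply hc; lia|apply cont_sh]|apply cont_rev]. }
    exists (int_of_cont a b _ u v cI ltac:(lra) ltac:(lra) ltac:(lra)).
    rewrite <- RInt_eq. unfold NN.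
    replace (j + (k - 1) + 1)%nat with (k + j)%nat by lia.
    field. apply pow_nonzero; lra.
Qed.

Print Assumptions mainTheorem7.
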